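(* Let $L>0$, let $\bar c:[0,L]\to(0,\infty)$ and $a,d:[0,L]\to\mathbb{R}$ be continuous, and let $R_0,R_L\in\mathbb{R}$ with $R_0R_L\neq 0$. For $\delta\in\{1,a,d\}$ define $I_{\bar c/\delta}(x)=\int_0^x \frac{\delta(y)}{\bar c(y)}\,dy$, writing $I_{\bar c}=I_{\bar c/1}$. For $s\in\mathbb{C}$ consider the boundary value problem for $\hat W=(\hat w_1,\hat w_2)^T:[0,L]\to\mathbb{C}^2$: $$s\hat w_1-\bar c(x)\hat w_1'=a(x)\hat w_1,\qquad s\hat w_2+\bar c(x)\hat w_2'=d(x)\hat w_2,\qquad x\in[0,L],$$ $$\hat w_2(0)=R_0\,\hat w_1(0),\qquad \hat w_1(L)=R_L\,\hat w_2(L).$$ Then this problem has a nontrivial solution if and only if $s=s_n$ for some $n\in\mathbb{Z}$, where $$s_n=\frac{\ln(R_0R_L)+I_{\bar c/d}(L)+I_{\bar c/a}(L)+2\pi n i}{2\,I_{\bar c}(L)},$$ and $\ln(R_0R_L)$ denotes any fixed complex logarithm of the nonzero real number $R_0R_L$. *)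

(* Defs.v *)
From Stdlib Require Import Reals ZArith.
From Coquelicot Require Export Coquelicot.
Open Scope R_scope.

Definition cont_on_0L (L : R) (f : R -> R) : Prop :=
  forall x, 0 <= x <= L ->
    filterlim f (within (fun y => 0 <= y <= L) (locally x)) (locally (f x)).

Definition ccont_on_0L (L : R) (f : R -> C) : Prop :=
  forall x, 0 <= x <= L ->
    filterlim f (within (fun y => 0 <= y <= L) (locally x)) (locally (f x)).

Definition cexp (z : C) : C :=
  (exp (Re z) * cos (Im z), exp (Re z) * sin (Im z)).

Definition Iw (cbar delta : R -> R) (x : R) : R :=
  RInt (fun y => delta y / cbar y) 0 x.

Definition is_solution (L : R) (cbar a d : R -> R) (R0 RL : R) (s : C)
    (w1 w2 : R -> C) : Prop :=
  ccont_on_0L L w1 /\ ccont_on_0L L w2 /\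
  (forall x, 0 < x < L ->
     exists w1' w2' : C,
       is_derive w1 x w1' /\ is_derive w2 x w2' /\
       (s * w1 x - RtoC (cbar x) * w1' = RtoC (a x) * w1 x)%C /\
       (s * w2 x + RtoC (cbar x) * w2' = RtoC (d x) * w2 x)%C) /\
  w2 0 = (RtoC R0 * w1 0)%C /\
  w1 L = (RtoC RL * w2 L)%C.

Definition nontrivial (L : R) (w1 w2 : R -> C) : Prop :=
  exists x, 0 <= x <= L /\ (w1 x <> 0%C \/ w2 x <> 0%C).

(* Main.v *)
Require Import Defs.
From Stdlib Require Import Reals ZArith Lra.
From Coquelicot Require Import Coquelicot.
Open Scope R_scope.

Lemma is_derive_C (f : R -> C) x l :
  is_derive f x l <->
  is_derive (fun t => fst (f t)) x (fst l) /\ is_derive (fun t => snd (f t)) x (snd l).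
Proof.
  split.
  - intros H. split.
    + apply (@filterdiff_comp R_AbsRing R_NormedModule C_R_NormedModule R_NormedModule (locally x) _ f fst _ fst H).
      apply filterdiff_linear, is_linear_fst.
    + apply (@filterdiff_comp R_AbsRing R_NormedModule C_R_NormedModule R_NormedModule (locally x) _ f snd _ snd H).
      apply filterdiff_linear, is_linear_snd.
  - intros [H1 H2].
    unfold is_derive.
    apply (filterdiff_ext (fun y => (fst (f y), snd (f y)))).
    { intros y; destruct (f y); reflexivity. }
    apply (@filterdiff_comp_2 R_AbsRing R_NormedModule R_NormedModule R_NormedModule C_R_NormedModule (locally x) _ _ _ (fun a b => (a,b)) _ _ (fun a b => (a,b)) H1 H2).
    apply filterdiff_linear.
    apply (is_linear_ext (fun t => t)).
    { intros [a b]; reflexivity. }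
    apply is_linear_id.
Qed.

Lemma deq (f : R -> R) (x l l' : R) : is_derive f x l -> l = l' -> is_derive f x l'.
Proof. intros H ->; exact H. Qed.

Lemma Rd_ext (f g : R -> R) (x l : R) : (forall t : R, f t = g t) -> is_derive f x l -> is_derive g x l.
Proof. intros H. apply is_derive_ext. exact H. Qed.

Lemma Rd_mult (f g : R -> R) x df dg : is_derive f x df -> is_derive g x dg ->
  is_derive (fun t => f t * g t) x (df * g x + f x * dg).
Proof. intros Hf Hg. exact (is_derive_mult f g x df dg Hf Hg Rmult_comm). Qed.

Lemma Rd_plus (f g : R -> R) x df dg : is_derive f x df -> is_derive g x dg ->
  is_derive (fun t => f t + g t) x (df + dg).
Proof. intros Hf Hg. exact (is_derive_plus f g x df dg Hf Hg). Qed.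

Lemma Rd_minus (f g : R -> R) x df dg : is_derive f x df -> is_derive g x dg ->
  is_derive (fun t => f t - g t) x (df - dg).
Proof. intros Hf Hg. exact (is_derive_minus f g x df dg Hf Hg). Qed.

Lemma Rd_const (c : R) x : is_derive (fun _ => c) x 0.
Proof. exact (is_derive_const c x). Qed.

Lemma Rd_exp (f : R -> R) x df : is_derive f x df -> is_derive (fun t => exp (f t)) x (df * exp (f x)).
Proof. intros Hf. exact (is_derive_comp exp f x _ _ (is_derive_exp (f x)) Hf). Qed.

Lemma Rd_cos (f : R -> R) x df : is_derive f x df -> is_derive (fun t => cos (f t)) x (df * - sin (f x)).
Proof. intros Hf. exact (is_derive_comp cos f x _ _ (is_derive_cos (f x)) Hf). Qed.

Lemma Rd_sin (f : R -> R) x df : is_derive f x df -> is_derive (fun t => sin (f t)) x (df * cos (f x)).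
Proof. intros Hf. exact (is_derive_comp sin f x _ _ (is_derive_sin (f x)) Hf). Qed.

Lemma Cd_mult (f g : R -> C) (x : R) (f' g' : C) : is_derive f x f' -> is_derive g x g' ->
  is_derive (fun t => (f t * g t)%C) x (f' * g x + f x * g')%C.
Proof.
  destruct f' as [f1 f2], g' as [g1 g2].
  rewrite !is_derive_C. intros [F1 F2] [G1 G2]. simpl in *. split.
  - eapply deq; [ apply Rd_minus; apply Rd_mult; eassumption | cbv beta; ring ].
  - eapply deq; [ apply Rd_plus; apply Rd_mult; eassumption | cbv beta; ring ].
Qed.

Lemma Cd_cexp (u : R -> C) (x : R) (u' : C) : is_derive u x u' ->
  is_derive (fun t => cexp (u t)) x (u' * cexp (u x))%C.
Proof.
  destruct u' as [u1 u2].
  rewrite !is_derive_C. intros [U1 U2]. unfold cexp. simpl in *. split.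
  - eapply deq; [ apply Rd_mult; [apply Rd_exp; eassumption | apply Rd_cos; eassumption] | cbv beta; ring ].
  - eapply deq; [ apply Rd_mult; [apply Rd_exp; eassumption | apply Rd_sin; eassumption] | cbv beta; ring ].
Qed.

Lemma Cd_const (c : C) (x : R) : is_derive (fun _ : R => c) x (RtoC 0).
Proof. apply is_derive_C; simpl; split; apply Rd_const. Qed.

Lemma Cd_lin (alpha : C) (P Q : R -> R) (x p q : R) : is_derive P x p -> is_derive Q x q ->
  is_derive (fun t => (alpha * RtoC (P t) + RtoC (Q t))%C) x (alpha * RtoC p + RtoC q)%C.
Proof.
  intros HP HQ. destruct alpha as [a1 a2]. apply is_derive_C. simpl. split.
  - apply (Rd_ext (fun t => a1 * P t + Q t)); [intros; ring|].
    eapply deq; [ apply Rd_plus; [apply Rd_mult; [apply Rd_const | exact HP] | exact HQ] | cbv beta; ring ].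
  - apply (Rd_ext (fun t => a2 * P t)); [intros; ring|].
    eapply deq; [ apply Rd_mult; [apply Rd_const | exact HP] | cbv beta; ring ].
Qed.

Lemma const_int (g : R -> R) (L : R) : (forall y, 0<y<L -> is_derive g y 0) ->
  forall x y, 0<x<L -> 0<y<L -> g x = g y.
Proof.
  intros Hd x y Hx Hy.
  destruct (MVT_gen g x y (fun _ => 0)) as [c [Hc E]].
  - intros z Hz. apply Hd. unfold Rmin, Rmax in Hz. destruct (Rle_dec x y); lra.
  - intros z Hz. apply continuity_pt_filterlim. apply (ex_derive_continuous (K:=R_AbsRing) (V:=R_NormedModule)).
    exists 0. apply Hd. unfold Rmin, Rmax in Hz. destruct (Rle_dec x y); lra.
  - lra.
Qed.

Lemma const_intC (h : R -> C) (L : R) : (forall y, 0<y<L -> is_derive h y (RtoC 0)) ->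
  forall x y, 0<x<L -> 0<y<L -> h x = h y.
Proof.
  intros Hd x y Hx Hy. apply injective_projections.
  - apply (const_int (fun t => fst (h t)) L); auto. intros z Hz. apply (proj1 (proj1 (is_derive_C h z _) (Hd z Hz))).
  - apply (const_int (fun t => snd (h t)) L); auto. intros z Hz. apply (proj2 (proj1 (is_derive_C h z _) (Hd z Hz))).
Qed.

Lemma endpt (L : R) (h G : R -> C) (p : R) : 0 < L -> (p = 0 \/ p = L) -> ccont_on_0L L h ->
  continuous G p -> (forall y, 0<y<L -> h y = G y) -> h p = G p.
Proof.
  intros HL Hp Hh HG Heq.
  set (F := within (fun y => 0<y<L) (locally p)).
  assert (FF : ProperFilter' F).
  { constructor.
    - intro HF. unfold F, within in HF. destruct HF as [eps He].
      pose (y := if Req_EM_T p 0 then Rmin (eps/2) (L/2) else L - Rmin (eps/2) (L/2)).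
      assert (Hm1 : 0 < Rmin (eps/2) (L/2)). { apply Rmin_glb_lt; destruct eps; simpl; lra. }
      assert (Hm2 : Rmin (eps/2) (L/2) <= eps/2) by apply Rmin_l.
      assert (Hm3 : Rmin (eps/2) (L/2) <= L/2) by apply Rmin_r.
      assert (Hpos := cond_pos eps).
      apply (He y).
      + change (Rabs (y - p) < eps). unfold y. destruct (Req_EM_T p 0).
        * subst p. rewrite Rminus_0_r, Rabs_pos_eq; lra.
        * destruct Hp as [Hp|Hp]; [contradiction|]. subst p.
          replace (L - Rmin (eps / 2) (L / 2) - L) with (- Rmin (eps / 2) (L / 2)) by ring.
          rewrite Rabs_Ropp, Rabs_pos_eq; lra.
      + unfold y. destruct (Req_EM_T p 0); lra.
    - apply within_filter, locally_filter. }
  assert (H1 : filterlim h F (locally (h p))).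
  { eapply filterlim_filter_le_1; [| apply (Hh p); destruct Hp; subst; lra].
    intros P HP. unfold F, within in *. apply filter_imp with (2 := HP). intros y Hy Hy'. apply Hy. lra. }
  assert (H2 : filterlim h F (locally (G p))).
  { apply (filterlim_within_ext _ G). { intros y Hy. symmetry. apply Heq. exact Hy. }
    eapply filterlim_filter_le_1; [| exact HG]. apply filter_le_within. }
  exact (filterlim_locally_unique (V:=C_R_NormedModule) h _ _ H1 H2).
Qed.

Definition cl (L y : R) := Rmax 0 (Rmin L y).
Definition ge (L : R) (cbar f : R -> R) (y : R) := f (cl L y) / cbar (cl L y).
Definition Fe (L : R) (cbar f : R -> R) (x : R) := RInt (ge L cbar f) 0 x.

Lemma cl_in L y : 0 <= L -> 0 <= cl L y <= L.
Proof. intros. unfold cl, Rmax, Rmin. repeat destruct Rle_dec; lra. Qed.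

Lemma cl_id L y : 0 <= y <= L -> cl L y = y.
Proof. intros. unfold cl, Rmax, Rmin. repeat destruct Rle_dec; lra. Qed.

Lemma cl_lip L x y : Rabs (cl L y - cl L x) <= Rabs (y - x).
Proof. unfold cl, Rmax, Rmin. repeat destruct Rle_dec; split_Rabs; lra. Qed.

Lemma cl_cont L x : 0 <= L ->
  filterlim (cl L) (locally x) (within (fun y => 0 <= y <= L) (locally (cl L x))).
Proof.
  intros HL P HP. unfold within in HP. destruct HP as [eps He].
  exists eps. intros y Hy. apply He.
  - change (Rabs (cl L y - cl L x) < eps). change (Rabs (y - x) < eps) in Hy.
    pose proof (cl_lip L x y). lra.
  - apply cl_in; auto.
Qed.

Lemma comp_cont L f x : 0 <= L -> cont_on_0L L f -> continuous (fun y => f (cl L y)) x.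
Proof.
  intros HL Hf. unfold continuous.
  eapply filterlim_comp; [apply cl_cont; auto | apply Hf, cl_in; auto].
Qed.

Lemma ge_cont L cbar f x : 0 <= L -> (forall x, 0<=x<=L -> 0<cbar x) ->
  cont_on_0L L cbar -> cont_on_0L L f -> continuous (ge L cbar f) x.
Proof.
  intros HL Hc Hcc Hf. unfold ge, Rdiv.
  apply (continuous_mult (K:=R_AbsRing) (fun y => f (cl L y)) (fun y => / cbar (cl L y))).
  - apply comp_cont; auto.
  - apply continuous_Rinv_comp. apply comp_cont; auto.
    pose proof (Hc (cl L x) (cl_in L x HL)). lra.
Qed.

Lemma Fe_deriv L cbar f x : 0 <= L -> (forall x, 0<=x<=L -> 0<cbar x) ->
  cont_on_0L L cbar -> cont_on_0L L f -> is_derive (Fe L cbar f) x (ge L cbar f x).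
Proof.
  intros HL Hc Hcc Hf. unfold Fe. apply (is_derive_RInt (V:=R_NormedModule)) with (a := 0).
  - apply filter_forall. intros b. apply (RInt_correct (V:=R_CompleteNormedModule)).
    apply ex_RInt_continuous. intros. apply ge_cont; auto.
  - apply ge_cont; auto.
Qed.

Lemma ge_int L cbar f x : 0 < x < L -> ge L cbar f x = f x / cbar x.
Proof. intros. unfold ge. rewrite cl_id; auto; lra. Qed.

Lemma Fe_Iw L cbar f : 0 <= L -> Fe L cbar f L = Iw cbar f L.
Proof.
  intros HL. unfold Fe, Iw. apply RInt_ext. rewrite Rmin_left, Rmax_right; auto.
  intros. apply ge_int; auto.
Qed.

Lemma Fe_0 L cbar f : Fe L cbar f 0 = 0.
Proof. unfold Fe. apply (RInt_point (V:=R_CompleteNormedModule)). Qed.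

Lemma Fe_pos L cbar : 0 < L -> (forall x, 0<=x<=L -> 0<cbar x) ->
  cont_on_0L L cbar -> 0 < Fe L cbar (fun _ => 1) L.
Proof.
  intros HL Hc Hcc. unfold Fe. apply RInt_gt_0; auto.
  - intros. rewrite ge_int; auto. unfold Rdiv. rewrite Rmult_1_l. apply Rinv_0_lt_compat, Hc. lra.
  - intros. apply ge_cont; try lra; auto. intros y _. apply filterlim_const.
Qed.

Lemma cexp_add z w : cexp (z + w)%C = (cexp z * cexp w)%C.
Proof.
  destruct z as [z1 z2], w as [w1 w2]. unfold cexp. simpl.
  rewrite exp_plus, cos_plus, sin_plus. apply injective_projections; simpl; ring.
Qed.

Lemma cexp_0 : cexp (RtoC 0) = RtoC 1.
Proof. unfold cexp. simpl. rewrite exp_0, cos_0, sin_0. apply injective_projections; simpl; ring. Qed.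

Lemma cexp_2pin (n : Z) : cexp (RtoC (2 * PI * IZR n) * Ci)%C = RtoC 1.
Proof.
  assert (Hs : sin (IZR n * PI) = 0) by (apply sin_eq_0_1; eauto).
  unfold cexp. simpl.
  replace (2 * PI * IZR n * 0 - 0 * 1) with 0 by ring.
  replace (2 * PI * IZR n * 1 + 0 * 0) with (2 * (IZR n * PI)) by ring.
  rewrite exp_0, cos_2a_sin, sin_2a, Hs. apply injective_projections; simpl; ring.
Qed.

Lemma cexp_eq1 z : cexp z = RtoC 1 -> exists n : Z, z = (0, 2 * PI * IZR n).
Proof.
  destruct z as [r t]. unfold cexp. simpl. intros H.
  assert (H1 : exp r * cos t = 1) by (injection H; auto).
  assert (H2 : exp r * sin t = 0) by (injection H; auto).
  assert (He := exp_pos r).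
  assert (Hs : sin t = 0).
  { destruct (Rmult_integral _ _ H2); lra. }
  assert (Hc2 : cos t * cos t = 1).
  { pose proof (sin2_cos2 t). unfold Rsqr in *. rewrite Hs in *. lra. }
  assert (Hc : cos t = 1).
  { destruct (Rle_lt_dec 0 (cos t)).
    - nra.
    - nra. }
  assert (Hr : exp r = 1) by (rewrite Hc in H1; lra).
  assert (Hr0 : r = 0). { rewrite <- exp_0 in Hr. apply exp_inv; auto. }
  destruct (sin_eq_0_0 t Hs) as [k Hk].
  destruct (Zeven_odd_dec k) as [Hev|Hod].
  - destruct (Zeven_ex k Hev) as [m Hm]. exists m. subst. f_equal.
    rewrite mult_IZR. simpl. ring.
  - exfalso. destruct (Zodd_ex k Hod) as [m Hm]. subst k.
    rewrite plus_IZR, mult_IZR in Hk. simpl in Hk.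
    assert (Hsm : sin (IZR m * PI) = 0) by (apply sin_eq_0_1; eauto).
    replace t with (2 * (IZR m * PI) + PI) in Hc by (rewrite Hk; ring).
    rewrite neg_cos, cos_2a_sin, Hsm in Hc. lra.
Qed.

Lemma Cd_eq (f : R -> C) (x : R) (l l' : C) : is_derive f x l -> l = l' -> is_derive f x l'.
Proof. intros H ->; exact H. Qed.

Lemma cont_of_der (w : R -> C) x : (exists l : C, is_derive w x l) -> continuous w x.
Proof. intros [l H]. apply (ex_derive_continuous (K:=R_AbsRing) (V:=C_R_NormedModule)). exists l. exact H. Qed.

Lemma ccont_of_der L (w : R -> C) : (forall x, exists l : C, is_derive w x l) -> ccont_on_0L L w.
Proof.
  intros H x _. eapply filterlim_filter_le_1; [apply filter_le_within|]. apply cont_of_der, H.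
Qed.

Lemma sol_form L (w u v k kv : R -> C) : 0 < L -> ccont_on_0L L w ->
  (forall x, is_derive u x (k x)) -> (forall x, is_derive v x (kv x)) ->
  (forall x, kv x = (- k x)%C) -> (forall t, (u t + v t)%C = RtoC 0) ->
  (forall x, 0<x<L -> exists w' : C, is_derive w x w' /\ w' = (k x * w x)%C) ->
  exists K, forall y, 0<=y<=L -> w y = (K * cexp (u y))%C.
Proof.
  intros HL Hwc du dv Hk Huv Hode.
  set (h := fun t => (w t * cexp (v t))%C).
  assert (Hh : forall x, 0<x<L -> is_derive h x (RtoC 0)).
  { intros x Hx. destruct (Hode x Hx) as [w' [Dw Ew]].
    eapply Cd_eq; [apply Cd_mult; [exact Dw | apply Cd_cexp, dv]|].
    rewrite Ew, Hk. ring. }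
  exists (h (L/2)).
  assert (Hin : forall y, 0<y<L -> w y = (h (L/2)%R * cexp (u y))%C).
  { intros y Hy. rewrite <- (const_intC h L Hh y (L/2)) by lra.
    unfold h. rewrite <- Cmult_assoc, <- cexp_add.
    replace (v y + u y)%C with (RtoC 0) by (rewrite <- (Huv y); ring).
    rewrite cexp_0. ring. }
  assert (dG : forall x, exists l, is_derive (fun t => (h (L/2)%R * cexp (u t))%C) x l).
  { intros x. eexists. apply Cd_mult; [apply Cd_const | apply Cd_cexp, du]. }
  intros y Hy.
  destruct (Rle_lt_or_eq_dec 0 y (proj1 Hy)) as [H0|H0].
  - destruct (Rle_lt_or_eq_dec y L (proj2 Hy)) as [H1|H1].
    + apply Hin; lra.
    + subst y. apply (endpt L w (fun t => (h (L/2)%R * cexp (u t))%C)); auto.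
      apply cont_of_der, dG.
  - subst y. apply (endpt L w (fun t => (h (L/2)%R * cexp (u t))%C)); auto.
    apply cont_of_der, dG.
Qed.

Lemma ode1 (s w w' : C) (c a : R) : c <> 0 ->
  (s * w - RtoC c * w' = RtoC a * w)%C ->
  w' = ((s * RtoC (1 / c) + RtoC (- (a / c))) * w)%C.
Proof.
  intros Hc E.
  assert (Hc' : RtoC c <> RtoC 0) by (intro H; injection H; auto).
  replace w' with ((RtoC c * w') / RtoC c)%C by (field; auto).
  replace (RtoC c * w')%C with (s * w - RtoC a * w)%C by (rewrite <- E; ring).
  rewrite RtoC_opp, !RtoC_div by auto. field. auto.
Qed.

Lemma ode2 (s w w' : C) (c d : R) : c <> 0 ->
  (s * w + RtoC c * w' = RtoC d * w)%C ->
  w' = ((- s * RtoC (1 / c) + RtoC (d / c)) * w)%C.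
Proof.
  intros Hc E.
  assert (Hc' : RtoC c <> RtoC 0) by (intro H; injection H; auto).
  replace w' with ((RtoC c * w') / RtoC c)%C by (field; auto).
  replace (RtoC c * w')%C with (RtoC d * w - s * w)%C by (rewrite <- E; ring).
  rewrite !RtoC_div by auto. field. auto.
Qed.

Lemma Rd_opp (f : R -> R) (x l : R) : is_derive f x l -> is_derive (fun t => - f t) x (- l).
Proof.
  intros H. eapply deq; [apply (Rd_ext (fun t => 0 - f t)); [intros; ring | apply Rd_minus; [apply Rd_const | exact H]] | ring].
Qed.

Theorem mainTheorem2 (L : R) (cbar a d : R -> R) (R0 RL : R) (lnR : C) (s : C) :
  0 < L ->
  (forall x, 0 <= x <= L -> 0 < cbar x) ->
  cont_on_0L L cbar -> cont_on_0L L a -> cont_on_0L L d ->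
  R0 * RL <> 0 ->
  cexp lnR = RtoC (R0 * RL) ->
  (exists w1 w2 : R -> C, is_solution L cbar a d R0 RL s w1 w2 /\ nontrivial L w1 w2)
  <->
  (exists n : Z,
     s = ((lnR + RtoC (Iw cbar d L) + RtoC (Iw cbar a L)
           + RtoC (2 * PI * IZR n) * Ci) / (RtoC 2 * RtoC (Iw cbar (fun _ => 1) L)))%C).
Proof.
  intros HL Hc Hcc Ha Hd HR Hln.
  assert (HL' : 0 <= L) by lra.
  assert (H1c : cont_on_0L L (fun _ => 1)) by (intros y _; apply filterlim_const).
  rewrite <- !Fe_Iw by auto.
  pose proof (Fe_pos L cbar HL Hc Hcc) as HPL.
  set (P := Fe L cbar (fun _ => 1)) in *.
  set (A := Fe L cbar a) in *.
  set (D := Fe L cbar d) in *.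
  set (gP := ge L cbar (fun _ => 1)).
  set (gA := ge L cbar a).
  set (gD := ge L cbar d).
  assert (dP : forall x, is_derive P x (gP x)) by (intros; apply Fe_deriv; auto).
  assert (dA : forall x, is_derive A x (gA x)) by (intros; apply Fe_deriv; auto).
  assert (dD : forall x, is_derive D x (gD x)) by (intros; apply Fe_deriv; auto).
  assert (P0 : P 0 = 0) by apply Fe_0.
  assert (A0 : A 0 = 0) by apply Fe_0.
  assert (D0 : D 0 = 0) by apply Fe_0.
  set (u1 := fun t => (s * RtoC (P t) + RtoC (- A t))%C).
  set (u2 := fun t => (- s * RtoC (P t) + RtoC (D t))%C).
  set (k1 := fun x => (s * RtoC (gP x) + RtoC (- gA x))%C).
  set (k2 := fun x => (- s * RtoC (gP x) + RtoC (gD x))%C).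
  assert (du1 : forall x, is_derive u1 x (k1 x)).
  { intros x. apply Cd_lin; [apply dP | apply Rd_opp, dA]. }
  assert (du2 : forall x, is_derive u2 x (k2 x)).
  { intros x. apply Cd_lin; [apply dP | apply dD]. }
  assert (u10 : u1 0 = RtoC 0).
  { unfold u1. rewrite P0, A0. apply injective_projections; simpl; ring. }
  assert (u20 : u2 0 = RtoC 0).
  { unfold u2. rewrite P0, D0. apply injective_projections; simpl; ring. }
  assert (HPL0 : (RtoC 2 * RtoC (P L))%C <> RtoC 0).
  { rewrite <- RtoC_mult. intro H. injection H. lra. }
  split.
  - intros (w1 & w2 & [Hw1c [Hw2c [Hode [B0 BL]]]] & [y0 [Hy0 Hnt]]).
    destruct (sol_form L w1 u1 (fun t => (- s * RtoC (P t) + RtoC (A t))%C) k1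
                (fun x => (- s * RtoC (gP x) + RtoC (gA x))%C) HL Hw1c du1) as [K1 HK1].
    { intros x. apply Cd_lin; [apply dP | apply dA]. }
    { intros x. unfold k1. apply injective_projections; simpl; ring. }
    { intros t. unfold u1. apply injective_projections; simpl; ring. }
    { intros x Hx. destruct (Hode x Hx) as (w1' & w2' & D1 & D2 & E1 & E2).
      exists w1'. split; auto. unfold k1, gP, gA. rewrite !ge_int by auto.
      apply ode1; auto. pose proof (Hc x). lra. }
    destruct (sol_form L w2 u2 (fun t => (s * RtoC (P t) + RtoC (- D t))%C) k2
                (fun x => (s * RtoC (gP x) + RtoC (- gD x))%C) HL Hw2c du2) as [K2 HK2].
    { intros x. apply Cd_lin; [apply dP | apply Rd_opp, dD]. }
    { intros x. unfold k2. apply injective_projections; simpl; ring. }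
    { intros t. unfold u2. apply injective_projections; simpl; ring. }
    { intros x Hx. destruct (Hode x Hx) as (w1' & w2' & D1 & D2 & E1 & E2).
      exists w2'. split; auto. unfold k2, gP, gD. rewrite !ge_int by auto.
      apply ode2; auto. pose proof (Hc x). lra. }
    assert (W10 : w1 0 = K1). { rewrite HK1 by lra. rewrite u10, cexp_0. ring. }
    assert (W20 : w2 0 = K2). { rewrite HK2 by lra. rewrite u20, cexp_0. ring. }
    assert (HK1n : K1 <> RtoC 0).
    { intro HK.
      assert (HK2' : K2 = RtoC 0) by (rewrite <- W20, B0, W10, HK; ring).
      destruct Hnt as [Hn|Hn]; apply Hn.
      - rewrite HK1 by auto. rewrite HK. ring.
      - rewrite HK2 by auto. rewrite HK2'. ring. }
    rewrite HK1, HK2 in BL by lra. rewrite <- W20, B0, W10 in BL.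
    assert (Ex : cexp (u1 L) = (RtoC (R0 * RL) * cexp (u2 L))%C).
    { replace (cexp (u1 L)) with (/ K1 * (K1 * cexp (u1 L)))%C by (field; auto).
      rewrite BL, RtoC_mult. field. auto. }
    rewrite <- Hln, <- cexp_add in Ex.
    assert (Ez : cexp (u1 L + - (lnR + u2 L))%C = RtoC 1).
    { rewrite cexp_add, Ex, <- cexp_add.
      replace (lnR + u2 L + - (lnR + u2 L))%C with (RtoC 0) by ring. apply cexp_0. }
    destruct (cexp_eq1 _ Ez) as [n Hn]. exists n.
    unfold u1, u2 in Hn. destruct s as [s1 s2], lnR as [l1 l2].
    simpl in Hn. injection Hn. intros Hn2 Hn1.
    assert (E1 : s1 = (l1 + D L + A L) / (2 * P L)).
    { field_simplify_eq; lra. }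
    assert (E2 : s2 = (l2 + 2 * PI * IZR n) / (2 * P L)).
    { field_simplify_eq; lra. }
    rewrite E1, E2.
    apply injective_projections; simpl; field; lra.
  - intros [n Hs].
    exists (fun t => cexp (u1 t)), (fun t => (RtoC R0 * cexp (u2 t))%C).
    split.
    + split; [|split; [|split; [|split]]].
      * apply ccont_of_der. intros x. eexists. apply Cd_cexp, du1.
      * apply ccont_of_der. intros x. eexists. apply Cd_mult; [apply Cd_const | apply Cd_cexp, du2].
      * intros x Hx. eexists. eexists. split; [apply Cd_cexp, du1|].
        split; [apply Cd_mult; [apply Cd_const | apply Cd_cexp, du2]|].
        assert (Hcx : cbar x <> 0) by (pose proof (Hc x); lra).
        assert (Hcx' : RtoC (cbar x) <> RtoC 0) by (intro H; injection H; auto).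
        unfold k1, k2, gP, gA, gD. rewrite !ge_int by auto.
        rewrite !RtoC_opp, !RtoC_div by auto.
        split; field; auto.
      * simpl. rewrite u10, u20. ring.
      * assert (Hu : u1 L = (lnR + u2 L + RtoC (2 * PI * IZR n) * Ci)%C).
        { unfold u1, u2. rewrite Hs. destruct lnR as [l1 l2].
          apply injective_projections; simpl; field; lra. }
        rewrite Hu, !cexp_add, Hln, cexp_2pin, RtoC_mult. ring.
    + exists 0. split; [lra|]. left. rewrite u10, cexp_0. intro H. injection H. lra.
Qed.
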